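(* Let $k\geq 1$ be an integer. For every integer $n$ with $2^{k-1}<n<2^k$, the minimal Colless index satisfies $c_n<2^{k-1}$; i.e. $\max_{n\in(2^{k-1},2^k)}c_n<2^{k-1}$.
   Context: A rooted binary tree with $n\geq 2$ leaves is a rooted tree whose root has degree 2 and all other internal nodes have degree 3; for $n=1$ it is a single node. For an internal node $v$ with children $v_1,v_2$, let $\kappa(v_i)$ be the number of leaves descending from $v_i$ ($1$ if a leaf). The Colless index is $\mathcal{C}(T)=\sum_v|\kappa(v_1)-\kappa(v_2)|$ over internal nodes $v$; $c_n$ is its minimum over all rooted binary trees with $n$ leaves. *)

(* Defs.v *)
From mathcomp Require Import all_boot.
From mathcomp Require Import boolp.
Set Implicit Arguments. Unset Strict Implicit. Unset Printing Implicit Defensive.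

(* Rooted binary trees (unlabelled, ordered children; the Colless index is
   symmetric so ordering is irrelevant). *)
Inductive btree : Type :=
| Leaf : btree
| Node : btree -> btree -> btree.

Fixpoint leaves (t : btree) : nat :=
  match t with
  | Leaf => 1
  | Node l r => leaves l + leaves r
  end.

Definition absdiff (a b : nat) : nat := (a - b) + (b - a).

Fixpoint colless (t : btree) : nat :=
  match t with
  | Leaf => 0
  | Node l r => absdiff (leaves l) (leaves r) + colless l + colless r
  end.

Fixpoint caterpillar (n : nat) : btree :=
  match n with
  | 0 => Leaf
  | m.+1 => Node (caterpillar m) Leaf
  end.

Lemma leaves_caterpillar n : leaves (caterpillar n) = n.+1.
Proof. by elim: n => //= n ->; rewrite addn1. Qed.

(* c is the Colless index of some tree with max(n,1) leaves
   (classical boolean reflection of the Prop) *)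
Definition colless_attained (n c : nat) : bool :=
  `[< exists t, leaves t = n.-1.+1 /\ colless t = c >].

Lemma colless_attained_ex n : exists c, colless_attained n c.
Proof.
exists (colless (caterpillar n.-1)); apply/asboolP; exists (caterpillar n.-1).
by rewrite leaves_caterpillar.
Qed.

(* c_n : minimum Colless index over rooted binary trees with n leaves
   (meaningful for n >= 1; for n = 0 it defaults to c_1 = 0). *)
Definition min_colless (n : nat) : nat :=
  ex_minn (@colless_attained_ex n).

(* Main.v *)
Require Import Defs.
From mathcomp Require Import all_boot.
From mathcomp Require Import zify boolp.

Definition good (n : nat) (t : btree) :=
  leaves t = n /\ (forall j, n = 2 ^ j -> colless t = 0) /\
  (forall k, 2 ^ k < n < 2 ^ k.+1 -> colless t < 2 ^ k).

Lemma good_bound j x t : good x t -> 2 ^ j <= x <= 2 ^ j.+1 -> colless t <= 2 ^ j - 1.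
Proof.
move=> [_ [Hp Hi]] /andP[h1 h2].
have [e|ne] := eqVneq x (2 ^ j); first by rewrite (Hp j e).
have [e'|ne'] := eqVneq x (2 ^ j.+1); first by rewrite (Hp j.+1 e').
have := Hi j; rewrite expnS in ne' h2 *. have : 0 < 2 ^ j by rewrite expn_gt0. lia.
Qed.

Lemma main n : 0 < n -> exists t, good n t.
Proof.
elim: n {-2}n (leqnn n) => [|N IH] n Hn Hpos; first lia.
have [->|n2] := eqVneq n 1.
  exists Leaf; split=> //; split.
    by [].
  move=> k; rewrite expnS; have : 0 < 2 ^ k by rewrite expn_gt0.
  lia.
set b := n./2; set a := n - b.
have hn : n = b + b + odd n by rewrite /b -{1}(odd_double_half n) -addnn; lia.
have [ta [La [Pa Ia]]] : exists t, good a t by apply: IH; case: (odd n) hn; lia.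
have [tb [Lb [Pb Ib]]] : exists t, good b t by apply: IH; case: (odd n) hn; lia.
have Ga : good a ta by [].
have Gb : good b tb by [].
exists (Node ta tb); split; first by rewrite /= La Lb /a; lia.
have Hab : absdiff (leaves ta) (leaves tb) = odd n.
  by rewrite La Lb /absdiff /a; case: (odd n) hn; lia.
rewrite /= Hab; split.
  move=> [|j] e; first lia.
  have ev : odd n = false by rewrite e oddX.
  rewrite expnS in e.
  rewrite ev (Pa j) ?(Pb j) //; rewrite ev in hn; rewrite /a; lia.
move=> [|k]; first lia.
rewrite !expnS => /andP[h1 h2].
have hp : 0 < 2 ^ k by rewrite expn_gt0.
have ba := @good_bound k a ta Ga.
have bb := @good_bound k b tb Gb.
rewrite expnS in ba bb.
have : colless ta <= 2 ^ k - 1 by apply: ba; rewrite /a; case: (odd n) hn; lia.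
have : colless tb <= 2 ^ k - 1 by apply: bb; case: (odd n) hn; lia.
case: (odd n); lia.
Qed.

Theorem lemma8 (k n : nat) :
  1 <= k -> 2 ^ (k - 1) < n < 2 ^ k -> min_colless n < 2 ^ (k - 1).
Proof.
move=> hk /andP[h1 h2].
have npos : 0 < n by lia.
have [t [Lt [_ It]]] := @main n npos.
have hc : colless_attained n (colless t).
  apply/asboolP; exists t; split=> //; rewrite Lt; lia.
rewrite /min_colless; case: ex_minnP => m _ Hm.
apply: leq_ltn_trans (Hm _ hc) _.
apply: It; case: k hk h1 h2 => //= k _; rewrite subn1 /=.
by move=> -> ->.
Qed.
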